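(* For $x > 0$ let $$E(x) := \sqrt{1 - \exp\!\left(-x^2\,\frac{17 + 2x^2}{13.347 + 2x^2}\right)},$$ so that $E(x) = 2A(x\sqrt{2}) - 1$, where $A(y) = \frac{1}{2} + \frac{1}{2}\sqrt{1 - \exp\!\left(-y^2\frac{17+y^2}{26.694+2y^2}\right)}$. Then for every $x > 0$, $$\left|\frac{E(x) - \operatorname{erf}(x)}{\operatorname{erf}(x)}\right| < 1.79\cdot 10^{-4}.$$
   Context: $\operatorname{erf}(x) = \frac{2}{\sqrt{\pi}}\int_0^x e^{-t^2}\,dt$ is the error function; equivalently $\operatorname{erf}(x) = 2\Phi(x\sqrt{2}) - 1$, where $\Phi$ is the standard normal cumulative distribution function. *)

(* Defs.v *)
From Stdlib Require Import Reals Lra.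
Open Scope R_scope.

Lemma erf_integrand_continuous :
  forall t : R, continuity_pt (fun s => exp (- (s ^ 2))) t.
Proof. intro t. reg. Qed.

Lemma erf_integrable (x : R) :
  Riemann_integrable (fun t => exp (- (t ^ 2))) 0 x.
Proof.
  destruct (Rle_dec 0 x) as [H|H].
  - apply continuity_implies_RiemannInt; [exact H|].
    intros; apply erf_integrand_continuous.
  - apply RiemannInt_P1, continuity_implies_RiemannInt; [lra|].
    intros; apply erf_integrand_continuous.
Defined.

Definition erf (x : R) : R :=
  2 / sqrt PI * RiemannInt (erf_integrable x).

Definition E_approx (x : R) : R :=
  sqrt (1 - exp (- (x ^ 2) * ((17 + 2 * x ^ 2) / (13347 / 1000 + 2 * x ^ 2)))).

(* Main.v *)
Require Import Defs.
From Stdlib Require Import Reals.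
From Stdlib Require Import Lra Lia ZArith List Bool.
From Coquelicot Require Import Coquelicot.
Import ListNotations.
Open Scope R_scope.

Open Scope R_scope.

Fixpoint padd (p q : list Z) : list Z :=
  match p, q with
  | nil, _ => q
  | _, nil => p
  | a :: p', b :: q' => (a + b)%Z :: padd p' q'
  end.
Definition pscal (c : Z) (p : list Z) := map (Z.mul c) p.
Fixpoint pmul (p q : list Z) : list Z :=
  match p with
  | nil => nil
  | a :: p' => padd (pscal a q) (0%Z :: pmul p' q)
  end.
Fixpoint ppow (p : list Z) (n : nat) : list Z :=
  match n with O => [1%Z] | S m => pmul p (ppow p m) end.
Fixpoint pshift (p : list Z) (a : Z) : list Z :=
  match p with
  | nil => nil
  | c :: q => padd [c] (pmul [a; 1%Z] (pshift q a))
  end.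
Fixpoint negsum (p : list Z) : Z :=
  match p with nil => 0%Z | c :: q => (Z.min c 0 + negsum q)%Z end.
Definition check1 (p : list Z) (a : Z) : bool :=
  match pshift p a with nil => false | c :: q => Z.ltb 0 (c + negsum q) end.
Fixpoint checkn (p : list Z) (n : nat) : bool :=
  match n with O => true | S m => check1 p (Z.of_nat m) && checkn p m end.

Fixpoint pev (p : list Z) (x : R) : R :=
  match p with nil => 0 | c :: q => IZR c + x * pev q x end.

Lemma pev_padd p q x : pev (padd p q) x = pev p x + pev q x.
Proof.
  revert q; induction p as [|a p IH]; intros [|b q]; simpl; try ring.
  rewrite IH, plus_IZR; ring.
Qed.

Lemma pev_pscal c p x : pev (pscal c p) x = IZR c * pev p x.
Proof.
  induction p as [|a p IH]; simpl; [ring|].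
  rewrite IH, mult_IZR; ring.
Qed.

Lemma pev_pmul p q x : pev (pmul p q) x = pev p x * pev q x.
Proof.
  induction p as [|a p IH]; [simpl; ring|].
  replace (pmul (a::p) q) with (padd (pscal a q) (0%Z :: pmul p q)) by reflexivity.
  rewrite pev_padd, pev_pscal; simpl pev; rewrite IH; ring.
Qed.

Lemma pev_ppow p n x : pev (ppow p n) x = pev p x ^ n.
Proof.
  induction n as [|n IH]; [simpl; ring|].
  replace (ppow p (S n)) with (pmul p (ppow p n)) by reflexivity.
  rewrite pev_pmul, IH; simpl; ring.
Qed.

Lemma pev_pshift p a y : pev (pshift p a) y = pev p (IZR a + y).
Proof.
  induction p as [|c p IH]; [simpl; ring|].
  replace (pshift (c::p) a) with (padd [c] (pmul [a; 1%Z] (pshift p a))) by reflexivity.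
  rewrite pev_padd, pev_pmul; simpl pev; rewrite IH; ring.
Qed.

Lemma negsum_le0 p : (negsum p <= 0)%Z.
Proof. induction p; simpl; lia. Qed.

Lemma pev_negsum p y : 0 <= y <= 1 -> IZR (negsum p) <= pev p y.
Proof.
  intros Hy; induction p as [|c p IH]; simpl; [lra|].
  rewrite plus_IZR.
  assert (H0 := negsum_le0 p). apply IZR_le in H0.
  assert (Hm : IZR (Z.min c 0) <= IZR c) by (apply IZR_le; lia).
  assert (y * IZR (negsum p) <= y * pev p y) by (apply Rmult_le_compat_l; lra).
  assert (IZR (negsum p) <= y * IZR (negsum p)).
  { assert ((1 - y) * IZR (negsum p) <= 0).
    { assert (0 <= 1 - y) by lra. assert (0 <= (1-y) * - IZR (negsum p)) by (apply Rmult_le_pos; lra). lra. }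
    lra. }
  lra.
Qed.

Lemma check1_correct p a : check1 p a = true ->
  forall y, 0 <= y <= 1 -> 0 < pev p (IZR a + y).
Proof.
  unfold check1; intros H y Hy; rewrite <- pev_pshift.
  destruct (pshift p a) as [|c q]; [discriminate|].
  apply Z.ltb_lt in H. simpl.
  assert (H1 := pev_negsum q y Hy).
  assert (0 < IZR (c + negsum q)) by (apply IZR_lt; lia).
  rewrite plus_IZR in H0.
  assert (y * IZR (negsum q) <= y * pev q y) by (apply Rmult_le_compat_l; lra).
  assert (IZR (negsum q) <= y * IZR (negsum q)).
  { assert (H3 := negsum_le0 q). apply IZR_le in H3.
    assert (0 <= (1-y) * - IZR (negsum q)) by (apply Rmult_le_pos; lra). lra. }
  lra.
Qed.

Lemma checkn_correct p n : checkn p (S n) = true ->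
  forall s, 0 <= s <= INR (S n) -> 0 < pev p s.
Proof.
  induction n as [|n IH]; intros H s Hs.
  - simpl in H. apply andb_true_iff in H as [H1 _].
    replace s with (IZR (Z.of_nat 0) + s) by (simpl; ring).
    apply (check1_correct _ _ H1). simpl in Hs. lra.
  - remember (S n) as m. simpl in H. apply andb_true_iff in H as [H1 H2].
    destruct (Rle_dec s (INR m)) as [Hl|Hl].
    + subst m. apply IH; auto; lra.
    + replace s with (IZR (Z.of_nat m) + (s - INR m)) by (rewrite <- INR_IZR_INZ; ring).
      apply (check1_correct _ _ H1). rewrite S_INR in Hs. lra.
Qed.
Open Scope R_scope.

Fixpoint zfact (n : nat) : Z := match n with O => 1%Z | S m => (Z.of_nat (S m) * zfact m)%Z end.

Lemma zfact_pos n : (0 < zfact n)%Z.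
Proof. induction n; [simpl; lia|]. change (zfact (S n)) with (Z.of_nat (S n) * zfact n)%Z. apply Z.mul_pos_pos; lia. Qed.

Lemma IZR_zfact_S n : IZR (zfact (S n)) = INR (S n) * IZR (zfact n).
Proof. change (zfact (S n)) with (Z.of_nat (S n) * zfact n)%Z. rewrite mult_IZR, <- INR_IZR_INZ; reflexivity. Qed.

Lemma IZR_zfact_pos n : 0 < IZR (zfact n).
Proof. apply IZR_lt, zfact_pos. Qed.

Lemma incr_deriv (f df : R -> R) a b : a <= b ->
  (forall x, a <= x <= b -> is_derive f x (df x)) ->
  (forall x, a <= x <= b -> 0 <= df x) -> f a <= f b.
Proof.
  intros Hab Hd Hp.
  destruct (MVT_gen f a b df) as [c [Hc Heq]].
  - intros x Hx. rewrite Rmin_left, Rmax_right in Hx by lra. apply Hd; lra.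
  - intros x Hx. rewrite Rmin_left, Rmax_right in Hx by lra.
    apply continuity_pt_filterlim. apply (ex_derive_continuous (K:=R_AbsRing) (V:=R_NormedModule) f).
    eexists; apply Hd; lra.
  - rewrite Rmin_left, Rmax_right in Hc by lra.
    assert (0 <= df c * (b - a)) by (apply Rmult_le_pos; [apply Hp; lra | lra]). lra.
Qed.

Lemma is_derive_Rplus (f g : R -> R) x df dg : is_derive f x df -> is_derive g x dg ->
  is_derive (fun t => f t + g t) x (df + dg).
Proof. intros H1 H2. exact (is_derive_plus f g x df dg H1 H2). Qed.

Lemma is_derive_Rmult_c (g : R -> R) c x dg : is_derive g x dg ->
  is_derive (fun t => c * g t) x (c * dg).
Proof. intros H. exact (is_derive_scal g x c dg H). Qed.

Lemma is_derive_ext_R (f g : R -> R) (x l : R) :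
  (forall t : R, f t = g t) -> is_derive f x l -> is_derive g x l.
Proof. intros H1 H2. exact (is_derive_ext f g x l H1 H2). Qed.

Definition texpR (n : nat) (s : R) := sum_f_R0 (fun k => (-1)^k * s^k / IZR (zfact k)) n.

Lemma texpR_deriv n (s : R) : is_derive (texpR (S n)) s (- texpR n s).
Proof.
  induction n as [|n IH].
  - unfold texpR; simpl.
    evar (l : R). replace (- _) with l. 
    + unfold l. auto_derive; auto.
    + unfold l. simpl. field.
  - assert (Hz := IZR_zfact_pos (S n)).
    assert (E : forall t, texpR (S (S n)) t = texpR (S n) t + (-1)^(S (S n)) / IZR (zfact (S (S n))) * t ^ (S (S n))).
    { intros t. unfold texpR. rewrite tech5. field. apply Rgt_not_eq, IZR_zfact_pos. }
    apply (is_derive_ext_R (fun t => texpR (S n) t + (-1)^(S (S n)) / IZR (zfact (S (S n))) * t ^ (S (S n)))).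
    { intros t; rewrite E; reflexivity. }
    replace (- texpR (S n) s) with (- texpR n s + (-1)^(S (S n)) / IZR (zfact (S (S n))) * (INR (S (S n)) * 1 * s ^ Init.Nat.pred (S (S n)))).
    + apply is_derive_Rplus. exact IH.
      apply is_derive_Rmult_c. apply is_derive_pow. apply (is_derive_id (K:=R_AbsRing)).
    + rewrite IZR_zfact_S. unfold texpR. rewrite (tech5 _ n). simpl pred.
      simpl pow. field. split; [apply Rgt_not_eq; exact Hz|]. apply Rgt_not_eq. apply lt_0_INR; lia.
Qed.

Lemma texpR_0 n : texpR n 0 = 1.
Proof.
  induction n as [|n IH]; unfold texpR in *; [simpl; field|].
  rewrite tech5, IH. rewrite pow_i by lia. unfold Rdiv. ring.
Qed.

Lemma exp_neg_le1 s : 0 <= s -> exp (- s) <= 1.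
Proof.
  intros H. rewrite <- exp_0. destruct (Req_dec s 0) as [->|Hn].
  - rewrite Ropp_0; lra.
  - left; apply exp_increasing; lra.
Qed.

Lemma texp_alt n s : 0 <= s -> 0 <= (-1)^(S n) * (exp (- s) - texpR n s).
Proof.
  revert s; induction n as [|n IH]; intros s Hs.
  - unfold texpR; simpl. assert (H := exp_neg_le1 s Hs). lra.
  - assert (H0 : (-1)^(S (S n)) * (exp (- 0) - texpR (S n) 0) = 0).
    { rewrite texpR_0, Ropp_0, exp_0; ring. }
    rewrite <- H0.
    apply (incr_deriv (fun t => (-1)^(S (S n)) * (exp (- t) - texpR (S n) t))
             (fun t => (-1)^(S n) * (exp (- t) - texpR n t))); [lra| |].
    + intros x Hx.
      replace ((-1)^(S n) * (exp (- x) - texpR n x)) with ((-1)^(S (S n)) * ((- exp (- x)) + (- - texpR n x))) by (simpl; ring).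
      apply is_derive_Rmult_c.
      apply (is_derive_ext_R (fun t => exp (- t) + (- texpR (S n) t))).
      { intros; reflexivity. }
      apply is_derive_Rplus.
      * auto_derive; auto; ring.
      * apply (is_derive_opp (texpR (S n))). apply texpR_deriv.
    + intros x Hx. apply IH; lra.
Qed.

Definition Lsum (M : nat) (s : R) :=
  sum_f_R0 (fun k => (-1)^k * s^k / (IZR (zfact k) * (2 * INR k + 1))) M.
Definition Lpoly (M : nat) (x : R) := x * Lsum M (x ^ 2).

Lemma Lpoly_deriv M (x : R) : is_derive (Lpoly M) x (texpR M (x ^ 2)).
Proof.
  induction M as [|M IH].
  - unfold Lpoly, Lsum, texpR; simpl.
    apply (is_derive_ext_R (fun t => t)). { intros; simpl; field. }
    replace (1 * 1 / 1) with 1 by field. apply (is_derive_id (K:=R_AbsRing)).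
  - assert (Hz := IZR_zfact_pos (S M)).
    assert (Hi : 0 < 2 * INR (S M) + 1) by (assert (H := pos_INR (S M)); lra).
    apply (is_derive_ext_R (fun t => Lpoly M t + (-1)^(S M) / (IZR (zfact (S M)) * (2 * INR (S M) + 1)) * t ^ (2 * S M + 1))).
    { intros t. unfold Lpoly, Lsum. rewrite tech5. rewrite <- pow_mult.
      replace (t ^ (2 * S M + 1)) with (t * t ^ (2 * S M)) by (rewrite pow_add; ring). field. lra. }
    replace (texpR (S M) (x ^ 2)) with (texpR M (x^2) + (-1)^(S M) / (IZR (zfact (S M)) * (2 * INR (S M) + 1)) * (INR (2 * S M + 1) * 1 * x ^ Init.Nat.pred (2 * S M + 1))).
    + apply is_derive_Rplus; [exact IH|].
      apply is_derive_Rmult_c. apply is_derive_pow. apply (is_derive_id (K:=R_AbsRing)).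
    + unfold texpR. rewrite (tech5 _ M).
      replace (Init.Nat.pred (2 * S M + 1)) with (2 * S M)%nat by lia.
      rewrite pow_mult. rewrite plus_INR, mult_INR. simpl (INR 2). simpl (INR 1).
      field. lra.
Qed.

Definition gf (t : R) := exp (- (t ^ 2)).
Definition G (x : R) := RInt gf 0 x.

Lemma gf_cont (z : R) : continuous gf z.
Proof.
  apply (ex_derive_continuous (K:=R_AbsRing) (V:=R_NormedModule) gf).
  unfold gf; auto_derive; auto.
Qed.

Lemma gf_exRInt a b : ex_RInt gf a b.
Proof. apply (ex_RInt_continuous (V:=R_CompleteNormedModule)). intros; apply gf_cont. Qed.

Lemma G_deriv (x : R) : is_derive G x (gf x).
Proof.
  apply (is_derive_RInt gf G 0 x).
  - apply filter_forall. intros b. unfold G. apply (RInt_correct (V:=R_CompleteNormedModule)), gf_exRInt.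
  - apply gf_cont.
Qed.

Lemma G_0 : G 0 = 0.
Proof. unfold G. exact (RInt_point (V:=R_CompleteNormedModule) 0 gf). Qed.

Lemma G_poly M x : 0 <= x -> 0 <= (-1)^(S M) * (G x - Lpoly M x).
Proof.
  intros Hx.
  assert (H0 : (-1)^(S M) * (G 0 - Lpoly M 0) = 0).
  { rewrite G_0. unfold Lpoly. ring. }
  rewrite <- H0.
  apply (incr_deriv (fun t => (-1)^(S M) * (G t - Lpoly M t))
           (fun t => (-1)^(S M) * (exp (- (t ^ 2)) - texpR M (t ^ 2)))); [lra| |].
  - intros t Ht. apply is_derive_Rmult_c.
    apply (is_derive_ext_R (fun t => G t + - Lpoly M t)); [intros; reflexivity|].
    apply is_derive_Rplus. apply G_deriv.
    apply (is_derive_opp (Lpoly M)). apply Lpoly_deriv.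
  - intros t Ht. apply texp_alt. apply pow2_ge_0.
Qed.
Open Scope R_scope.

Fixpoint oddprod (n : nat) : Z := match n with O => 1%Z | S m => ((2 * Z.of_nat (S m) + 1) * oddprod m)%Z end.
Definition Cl (M : nat) := (zfact M * oddprod M)%Z.
Definition lcoef (M k : nat) : Z := ((-1) ^ Z.of_nat k * (Cl M / (zfact k * (2 * Z.of_nat k + 1))))%Z.
Definition lz (M : nat) := map (lcoef M) (seq 0 (S M)).
Definition texpc (N k : nat) : Z := ((-1) ^ Z.of_nat k * (zfact N / zfact k))%Z.
Definition Vp := [0; 17000; 2000]%Z.
Definition Dp := [13347; 2000]%Z.
Definition texpcomp (N : nat) : list Z :=
  fold_right (fun k acc => padd (pscal (texpc N k) (pmul (ppow Vp k) (ppow Dp (N - k)))) acc) nil (seq 0 (S N)).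
Definition divX (p : list Z) := tl p.
Definition PA0 N := padd (texpcomp N) (pscal (- zfact N) (ppow Dp N)).
Definition PB0 N := padd (pscal (zfact N) (ppow Dp N)) (pscal (-1) (texpcomp N)).
Definition ZA (M N : nat) :=
  padd (pscal (40014321281640000000 * zfact N) (pmul (pmul (lz M) (lz M)) (ppow Dp N)))
       (pscal (31415927000000000000 * (Cl M * Cl M)) (divX (PA0 N)))%Z.
Definition ZB (M N : nat) :=
  padd (pscal (31415926000000000000 * (Cl M * Cl M)) (divX (PB0 N)))
       (pscal (- 39985681281640000000 * zfact N) (pmul (pmul (lz M) (lz M)) (ppow Dp N)))%Z.

Lemma pev_hd_tl p s : pev p s = IZR (hd 0%Z p) + s * pev (tl p) s.
Proof. destruct p; simpl; ring. Qed.

Lemma pev_map_seq (f : nat -> Z) a n s :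
  pev (map f (seq a (S n))) s = sum_f_R0 (fun k => IZR (f (a + k)%nat) * s ^ k) n.
Proof.
  revert a; induction n as [|n IH]; intros a.
  - simpl. rewrite Nat.add_0_r. ring.
  - change (seq a (S (S n))) with (a :: seq (S a) (S n)).
    change (pev (map f (a :: seq (S a) (S n))) s) with (IZR (f a) + s * pev (map f (seq (S a) (S n))) s).
    rewrite IH. rewrite (decomp_sum _ (S n)) by lia. simpl pred.
    rewrite Nat.add_0_r. f_equal. ring. rewrite scal_sum.
    apply sum_eq. intros i _. replace (a + S i)%nat with (S a + i)%nat by lia. simpl. ring.
Qed.

Lemma pev_fold_seq (g : nat -> list Z) a n s :
  pev (fold_right (fun k acc => padd (g k) acc) nil (seq a (S n))) s =
  sum_f_R0 (fun k => pev (g (a + k)%nat) s) n.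
Proof.
  revert a; induction n as [|n IH]; intros a.
  - simpl. rewrite pev_padd, Nat.add_0_r. simpl. ring.
  - change (seq a (S (S n))) with (a :: seq (S a) (S n)).
    change (fold_right (fun k acc => padd (g k) acc) nil (a :: seq (S a) (S n)))
      with (padd (g a) (fold_right (fun k acc => padd (g k) acc) nil (seq (S a) (S n)))).
    rewrite pev_padd. rewrite IH.
    rewrite (decomp_sum _ (S n)) by lia. simpl pred. rewrite Nat.add_0_r. f_equal.
    apply sum_eq. intros i _. replace (a + S i)%nat with (S a + i)%nat by lia. reflexivity.
Qed.

Lemma zfact_div k n : (k <= n)%nat -> Z.divide (zfact k) (zfact n).
Proof.
  induction n as [|n IH]; intros H.
  - replace k with 0%nat by lia. apply Z.divide_refl.
  - destruct (Nat.eq_dec k (S n)) as [->|Hne]; [apply Z.divide_refl|].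
    change (zfact (S n)) with (Z.of_nat (S n) * zfact n)%Z.
    apply Z.divide_mul_r. apply IH; lia.
Qed.

Lemma oddprod_div k n : (k <= n)%nat -> Z.divide (2 * Z.of_nat k + 1) (oddprod n).
Proof.
  induction n as [|n IH]; intros H.
  - replace k with 0%nat by lia. simpl. apply Z.divide_refl.
  - destruct (Nat.eq_dec k (S n)) as [->|Hne].
    + change (oddprod (S n)) with ((2 * Z.of_nat (S n) + 1) * oddprod n)%Z. apply Z.divide_mul_l, Z.divide_refl.
    + change (oddprod (S n)) with ((2 * Z.of_nat (S n) + 1) * oddprod n)%Z.
      apply Z.divide_mul_r. apply IH; lia.
Qed.

Lemma IZR_div_exact a b : b <> 0%Z -> Z.divide b a -> IZR (a / b) = IZR a / IZR b.
Proof.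
  intros Hb [q ->]. rewrite Z.div_mul by exact Hb. rewrite mult_IZR. field. apply not_0_IZR; exact Hb.
Qed.

Lemma IZR_m1_pow k : IZR ((-1) ^ Z.of_nat k) = (-1) ^ k.
Proof. rewrite pow_IZR. reflexivity. Qed.

Lemma pev_lz M s : pev (lz M) s = IZR (Cl M) * Lsum M s.
Proof.
  unfold lz. rewrite pev_map_seq. unfold Lsum. rewrite scal_sum. apply sum_eq. intros k Hk.
  simpl (0 + k)%nat. unfold lcoef. rewrite mult_IZR, IZR_m1_pow.
  assert (Hz := zfact_pos k).
  rewrite IZR_div_exact.
  - rewrite mult_IZR, plus_IZR, mult_IZR, <- INR_IZR_INZ. field. split.
    + assert (H := pos_INR k). lra.
    + apply Rgt_not_eq, IZR_zfact_pos.
  - lia.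
  - unfold Cl. apply Z.divide_trans with (zfact k * oddprod M)%Z.
    + apply Z.mul_divide_mono_l. apply oddprod_div; lia.
    + apply Z.mul_divide_mono_r. apply zfact_div; lia.
Qed.

Definition uu (s : R) := s * ((17 + 2 * s) / (13347 / 1000 + 2 * s)).

Lemma pev_Vp s : pev Vp s = 17000 * s + 2000 * s ^ 2.
Proof. simpl. ring. Qed.
Lemma pev_Dp s : pev Dp s = 13347 + 2000 * s.
Proof. simpl. ring. Qed.

Lemma pev_texpcomp N s : 0 <= s ->
  pev (texpcomp N) s = IZR (zfact N) * (13347 + 2000 * s) ^ N * texpR N (uu s).
Proof.
  intros Hs. unfold texpcomp. rewrite pev_fold_seq. unfold texpR. rewrite scal_sum. apply sum_eq. intros k Hk.
  simpl (0 + k)%nat. rewrite pev_pscal, pev_pmul, !pev_ppow, pev_Vp, pev_Dp.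
  unfold texpc. rewrite mult_IZR, IZR_m1_pow.
  assert (Hz := zfact_pos k).
  rewrite IZR_div_exact by (try lia; apply zfact_div; lia).
  assert (HD : 0 < 13347 + 2000 * s) by lra.
  replace (uu s) with ((17000 * s + 2000 * s ^ 2) / (13347 + 2000 * s)) by (unfold uu; field; lra).
  assert (HP : (13347 + 2000 * s) ^ N = (13347 + 2000 * s) ^ (N - k) * (13347 + 2000 * s) ^ k)
    by (rewrite <- pow_add; f_equal; lia).
  rewrite HP.
  unfold Rdiv. rewrite Rpow_mult_distr, pow_inv.
  field. split; [apply Rgt_not_eq, IZR_zfact_pos|]. apply pow_nonzero; lra.
Qed.

Lemma Cl_pos M : (0 < Cl M)%Z.
Proof.
  unfold Cl. apply Z.mul_pos_pos. apply zfact_pos.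
  induction M as [|M IH]; [simpl; lia|].
  change (oddprod (S M)) with ((2 * Z.of_nat (S M) + 1) * oddprod M)%Z. apply Z.mul_pos_pos; lia.
Qed.

Lemma keyA_gen M N s (Hs : 0 < s) (Hhd : hd 0%Z (PA0 N) = 0%Z) (Hp : 0 < pev (ZA M N) s) :
  0 < 40014321281640000000 * s * Lsum M s ^ 2 + 31415927000000000000 * (texpR N (uu s) - 1).
Proof.
  unfold ZA in Hp. rewrite pev_padd, !pev_pscal, !pev_pmul, pev_lz, pev_ppow, pev_Dp in Hp.
  assert (HA := pev_hd_tl (PA0 N) s). rewrite Hhd in HA. unfold divX.
  unfold PA0 in HA. rewrite pev_padd, pev_pscal, pev_ppow, pev_Dp, pev_texpcomp in HA by lra.
  fold (PA0 N) in HA. unfold divX in Hp.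
  set (Q := pev (tl (PA0 N)) s) in *.
  set (Z := IZR (zfact N)) in *. set (C := IZR (Cl M)) in *. set (Dn := (13347 + 2000 * s) ^ N) in *.
  set (L := Lsum M s) in *. set (T := texpR N (uu s)) in *.
  rewrite !mult_IZR in Hp. fold Z in Hp. fold C in Hp.
  assert (HZ : 0 < Z) by apply IZR_zfact_pos.
  assert (HC : 0 < C) by (apply IZR_lt, Cl_pos).
  assert (HD : 0 < Dn) by (apply pow_lt; lra).
  rewrite opp_IZR in HA. fold Z in HA.
  assert (Hq : Q = Z * Dn * (T - 1) / s).
  { apply (Rmult_eq_reg_l s); [|lra]. unfold Rdiv. rewrite (Rmult_comm (Z * Dn * (T - 1))), <- Rmult_assoc, Rinv_r, Rmult_1_l by lra.
    nra. }
  rewrite Hq in Hp.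
  assert (H1 : 0 < s * (40014321281640000000 * Z * (C * L * (C * L)) * Dn + 31415927000000000000 * (C * C) * (Z * Dn * (T - 1) / s))).
  { apply Rmult_lt_0_compat; lra. }
  replace (s * (40014321281640000000 * Z * (C * L * (C * L)) * Dn + 31415927000000000000 * (C * C) * (Z * Dn * (T - 1) / s)))
    with ((Z * Dn * (C * C)) * (40014321281640000000 * s * L ^ 2 + 31415927000000000000 * (T - 1))) in H1 by (field; lra).
  assert (0 < Z * Dn * (C * C)) by (apply Rmult_lt_0_compat; [apply Rmult_lt_0_compat|apply Rmult_lt_0_compat]; lra).
  apply (Rmult_lt_reg_l (Z * Dn * (C * C))); lra.
Qed.

Lemma keyB_gen M N s (Hs : 0 < s) (Hhd : hd 0%Z (PB0 N) = 0%Z) (Hp : 0 < pev (ZB M N) s) :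
  0 < 31415926000000000000 * (1 - texpR N (uu s)) - 39985681281640000000 * s * Lsum M s ^ 2.
Proof.
  unfold ZB in Hp. rewrite pev_padd, !pev_pscal, !pev_pmul, pev_lz, pev_ppow, pev_Dp in Hp.
  assert (HA := pev_hd_tl (PB0 N) s). rewrite Hhd in HA.
  unfold PB0 in HA. rewrite pev_padd, !pev_pscal, pev_ppow, pev_Dp, pev_texpcomp in HA by lra.
  fold (PB0 N) in HA. unfold divX in Hp.
  set (Q := pev (tl (PB0 N)) s) in *.
  set (Z := IZR (zfact N)) in *. set (C := IZR (Cl M)) in *. set (Dn := (13347 + 2000 * s) ^ N) in *.
  set (L := Lsum M s) in *. set (T := texpR N (uu s)) in *.
  rewrite !mult_IZR in Hp. fold Z in Hp. fold C in Hp.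
  assert (HZ : 0 < Z) by apply IZR_zfact_pos.
  assert (HC : 0 < C) by (apply IZR_lt, Cl_pos).
  assert (HD : 0 < Dn) by (apply pow_lt; lra).
  assert (Hq : Q = Z * Dn * (1 - T) / s).
  { apply (Rmult_eq_reg_l s); [|lra]. unfold Rdiv. rewrite (Rmult_comm (Z * Dn * (1 - T))), <- Rmult_assoc, Rinv_r, Rmult_1_l by lra.
    nra. }
  rewrite Hq in Hp.
  assert (H1 : 0 < s * (31415926000000000000 * (C * C) * (Z * Dn * (1 - T) / s) + -39985681281640000000 * Z * (C * L * (C * L)) * Dn)).
  { apply Rmult_lt_0_compat; lra. }
  replace (s * (31415926000000000000 * (C * C) * (Z * Dn * (1 - T) / s) + -39985681281640000000 * Z * (C * L * (C * L)) * Dn))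
    with ((Z * Dn * (C * C)) * (31415926000000000000 * (1 - T) - 39985681281640000000 * s * L ^ 2)) in H1 by (field; lra).
  assert (0 < Z * Dn * (C * C)) by (apply Rmult_lt_0_compat; [apply Rmult_lt_0_compat|apply Rmult_lt_0_compat]; lra).
  apply (Rmult_lt_reg_l (Z * Dn * (C * C))); lra.
Qed.

Lemma hdA : hd 0%Z (PA0 35) = 0%Z. Proof. vm_compute. reflexivity. Qed.
Lemma hdB : hd 0%Z (PB0 34) = 0%Z. Proof. vm_compute. reflexivity. Qed.
Lemma chkA : checkn (ZA 31 35) 9 = true. Proof. vm_compute. reflexivity. Qed.
Lemma chkB : checkn (ZB 30 34) 9 = true. Proof. vm_compute. reflexivity. Qed.
Lemma chkL : checkn (lz 31) 9 = true. Proof. vm_compute. reflexivity. Qed.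

Lemma INR9 : INR 9 = 9.
Proof. rewrite INR_IZR_INZ. reflexivity. Qed.

Lemma keyA s : 0 < s <= 9 ->
  0 < 40014321281640000000 * s * Lsum 31 s ^ 2 + 31415927000000000000 * (texpR 35 (uu s) - 1).
Proof.
  intros Hs. apply keyA_gen; [lra|apply hdA|].
  apply (checkn_correct _ 8 chkA). rewrite INR9. lra.
Qed.

Lemma keyB s : 0 < s <= 9 ->
  0 < 31415926000000000000 * (1 - texpR 34 (uu s)) - 39985681281640000000 * s * Lsum 30 s ^ 2.
Proof.
  intros Hs. apply keyB_gen; [lra|apply hdB|].
  apply (checkn_correct _ 8 chkB). rewrite INR9. lra.
Qed.

Lemma keyL s : 0 <= s <= 9 -> 0 < Lsum 31 s.
Proof.
  intros Hs. assert (H := checkn_correct _ 8 chkL s). rewrite INR9 in H.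
  rewrite pev_lz in H. assert (HC : 0 < IZR (Cl 31)) by (apply IZR_lt, Cl_pos).
  assert (0 < IZR (Cl 31) * Lsum 31 s) by (apply H; lra).
  apply (Rmult_lt_reg_l (IZR (Cl 31))); lra.
Qed.
Ltac Req := match goal with |- @eq _ ?a ?b => change (@eq R a b) end.
Definition If (x t : R) := exp (- (x ^ 2 * (1 + t ^ 2))) / (1 + t ^ 2).
Definition Ig (x : R) := RInt (If x) 0 1.

Lemma onept_pos (t : R) : 0 < 1 + t ^ 2.
Proof. assert (H := pow2_ge_0 t). lra. Qed.

Lemma If_derive (u v : R) : is_derive (fun z => If z v) u (-2 * u * exp (- (u ^ 2 * (1 + v ^ 2)))).
Proof.
  unfold If. assert (H := onept_pos v).
  auto_derive; [trivial|].
  Req. replace (u * (u * 1) * (1 + v * (v * 1))) with (u ^ 2 * (1 + v ^ 2)) by ring. field. apply Rgt_not_eq; lra.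
Qed.

Lemma If_cont (x t : R) : continuous (If x) t.
Proof.
  apply (ex_derive_continuous (K:=R_AbsRing) (V:=R_NormedModule) (If x)).
  unfold If; auto_derive. assert (H := onept_pos t). simpl in H. lra.
Qed.

Lemma If_exRInt x a b : ex_RInt (If x) a b.
Proof. apply (ex_RInt_continuous (V:=R_CompleteNormedModule)). intros; apply If_cont. Qed.

Lemma I_deriv (x : R) : is_derive Ig x (-2 * exp (- (x ^ 2)) * G x).
Proof.
  unfold Ig.
  assert (Hd : is_derive (fun x0 => RInt (fun t => If x0 t) 0 1) x
                 (RInt (fun t => Derive (fun u => If u t) x) 0 1)).
  { apply (is_derive_RInt_param If 0 1 x).
    - apply filter_forall. intros y t _. eexists. apply If_derive.
    - intros t _.
      apply (continuity_2d_pt_ext (fun u v => -2 * u * exp (- (u * u * (1 + v * v))))).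
      { intros u v. symmetry. apply is_derive_unique. 
        replace (u * u * (1 + v * v)) with (u ^ 2 * (1 + v ^ 2)) by ring. apply If_derive. }
      apply continuity_2d_pt_mult.
      + apply continuity_2d_pt_mult. apply continuity_2d_pt_const. apply continuity_2d_pt_id1.
      + apply (continuity_1d_2d_pt_comp exp (fun u v => - (u * u * (1 + v * v)))).
        * apply derivable_continuous_pt, derivable_pt_exp.
        * apply continuity_2d_pt_opp. apply continuity_2d_pt_mult.
          apply continuity_2d_pt_mult; apply continuity_2d_pt_id1.
          apply continuity_2d_pt_plus. apply continuity_2d_pt_const.
          apply continuity_2d_pt_mult; apply continuity_2d_pt_id2.
    - apply filter_forall. intros y. apply If_exRInt. }
  eapply is_derive_ext_R; [intros t; reflexivity|].
  replace (-2 * exp (- (x ^ 2)) * G x) with (RInt (fun t => Derive (fun u => If u t) x) 0 1).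
  { exact Hd. }
  rewrite (RInt_ext _ (fun t => scal (-2 * exp (- (x ^ 2))) (scal x (gf (x * t + 0))))).
  2:{ intros t _. apply eq_trans with (-2 * x * exp (- (x ^ 2 * (1 + t ^ 2)))).
      { apply is_derive_unique, If_derive. }
      change (-2 * x * exp (- (x ^ 2 * (1 + t ^ 2))) = (-2 * exp (- (x ^ 2))) * (x * gf (x * t + 0))).
      unfold gf.
      replace (- (x ^ 2 * (1 + t ^ 2))) with (- (x ^ 2) + - ((x * t + 0) ^ 2)) by ring.
      rewrite exp_plus. ring. }
  rewrite (RInt_scal (V:=R_CompleteNormedModule)).
  2:{ apply (ex_RInt_continuous (V:=R_CompleteNormedModule)). intros z _.
      apply (ex_derive_continuous (K:=R_AbsRing) (V:=R_NormedModule)).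
      unfold gf, scal; simpl; unfold mult; simpl. auto_derive. auto. }
  rewrite (RInt_comp_lin (V:=R_CompleteNormedModule)). 2: apply gf_exRInt.
  replace (x * 0 + 0) with 0 by ring. replace (x * 1 + 0) with x by ring.
  unfold scal; simpl; unfold mult; simpl. reflexivity.
Qed.

Definition Hg (x : R) := G x ^ 2 + Ig x.

Lemma Hg_deriv (x : R) : is_derive Hg x 0.
Proof.
  unfold Hg.
  replace 0 with (INR 2 * gf x * G x ^ Init.Nat.pred 2 + (-2 * exp (- (x ^ 2)) * G x)).
  - apply is_derive_Rplus. apply is_derive_pow. apply G_deriv. apply I_deriv.
  - unfold gf. simpl. ring.
Qed.

Lemma Hg_const (x : R) : 0 <= x -> Hg x = Hg 0.
Proof.
  intros Hx. apply Rle_antisym.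
  - assert (H := incr_deriv (fun t => - Hg t) (fun _ => 0) 0 x Hx).
    assert (- Hg 0 <= - Hg x); [|lra].
    apply H; [|intros; lra].
    intros t _. replace 0 with (- 0) by ring. apply (is_derive_opp Hg). apply Hg_deriv.
  - apply (incr_deriv Hg (fun _ => 0) 0 x Hx); [|intros; lra].
    intros t _. apply Hg_deriv.
Qed.

Lemma atan_RInt : RInt (fun t => / (1 + t ^ 2)) 0 1 = PI / 4.
Proof.
  assert (H : is_RInt (fun t => / (1 + t ^ 2)) 0 1 (minus (atan 1) (atan 0))).
  { apply (is_RInt_derive (V:=R_CompleteNormedModule) atan).
    - intros t _. apply is_derive_Reals. apply derivable_pt_lim_atan.
    - intros t _. apply (ex_derive_continuous (K:=R_AbsRing) (V:=R_NormedModule)).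
      auto_derive. assert (H := onept_pos t). simpl in H. lra. }
  apply (is_RInt_unique (V:=R_CompleteNormedModule)) in H. rewrite H. rewrite atan_1, atan_0.
  unfold minus, plus, opp; simpl. ring.
Qed.

Lemma Hg_0 : Hg 0 = PI / 4.
Proof.
  unfold Hg, Ig. rewrite G_0. rewrite <- atan_RInt.
  rewrite (RInt_ext _ (fun t => / (1 + t ^ 2))).
  - simpl; ring.
  - intros t _. unfold If. replace (- (0 ^ 2 * (1 + t ^ 2))) with 0 by ring.
    rewrite exp_0. Req. unfold Rdiv. ring.
Qed.

Lemma gauss_upper x : 0 <= x -> G x ^ 2 <= PI / 4.
Proof.
  intros Hx. rewrite <- Hg_0, <- (Hg_const x Hx). unfold Hg.
  assert (0 <= Ig x); [|lra].
  apply RInt_ge_0; [lra | apply If_exRInt |].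
  intros t _. unfold If. apply Rlt_le, Rdiv_lt_0_compat. apply exp_pos. apply onept_pos.
Qed.

Lemma gauss_lower x : 0 <= x -> PI / 4 * (1 - exp (- (x ^ 2))) <= G x ^ 2.
Proof.
  intros Hx. assert (E := Hg_const x Hx). rewrite Hg_0 in E. unfold Hg in E.
  assert (Ig x <= exp (- (x ^ 2)) * (PI / 4)).
  { rewrite <- atan_RInt.
    rewrite <- (RInt_scal (V:=R_CompleteNormedModule)).
    2:{ apply (ex_RInt_continuous (V:=R_CompleteNormedModule)). intros z _.
        apply (ex_derive_continuous (K:=R_AbsRing) (V:=R_NormedModule)).
        auto_derive. assert (H := onept_pos z). simpl in H. lra. }
    apply RInt_le; [lra | apply If_exRInt | |].
    - apply (ex_RInt_continuous (V:=R_CompleteNormedModule)). intros z _.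
      apply (ex_derive_continuous (K:=R_AbsRing) (V:=R_NormedModule)).
      unfold scal; simpl; unfold mult; simpl.
      auto_derive. assert (H := onept_pos z). simpl in H. lra.
    - intros t _. unfold If.
      change (exp (- (x ^ 2 * (1 + t ^ 2))) / (1 + t ^ 2) <= exp (- (x ^ 2)) * / (1 + t ^ 2)).
      assert (Ht := onept_pos t). unfold Rdiv.
      apply Rmult_le_compat_r; [apply Rlt_le, Rinv_0_lt_compat; lra|].
      assert (Hx2 := pow2_ge_0 x). assert (Ht2 := pow2_ge_0 t).
      assert (x ^ 2 <= x ^ 2 * (1 + t ^ 2)).
      { assert (0 <= x ^ 2 * t ^ 2) by (apply Rmult_le_pos; lra). nra. }
      destruct (Req_dec (x ^ 2) (x ^ 2 * (1 + t ^ 2))) as [Heq|Hne].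
      + rewrite <- Heq; lra.
      + left; apply exp_increasing; lra. }
  lra.
Qed.
Lemma INR_fact_zfact n : INR (fact n) = IZR (zfact n).
Proof.
  induction n as [|n IH]; [reflexivity|].
  change (fact (S n)) with (S n * fact n)%nat. rewrite mult_INR, IH.
  change (zfact (S n)) with (Z.of_nat (S n) * zfact n)%Z. rewrite mult_IZR, <- INR_IZR_INZ. reflexivity.
Qed.
Definition cosZ (a : R) (n : nat) := sum_f_R0 (fun i => (-1)^i * (a^(2*i) / IZR (zfact (2*i)))) n.

Lemma cos_approx_Z a n : cos_approx a n = cosZ a n.
Proof.
  unfold cos_approx, cosZ, cos_term. apply sum_eq. intros i _. rewrite INR_fact_zfact. reflexivity.
Qed.

Lemma PI_lb : 31415926 / 10000000 < PI.
Proof.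
  assert (H : 31415926 / 20000000 < PI / 2); [|lra].
  apply PI2_lower_bound; [lra|].
  destruct (pre_cos_bound (31415926 / 20000000) 3) as [H1 _]; [lra|lra|].
  eapply Rlt_le_trans; [|exact H1].
  rewrite cos_approx_Z. unfold cosZ. cbv [sum_f_R0 Nat.mul Nat.add zfact Z.of_nat Z.mul Pos.mul Pos.of_succ_nat Pos.succ Pos.add].
  lra.
Qed.

Lemma PI_ub : PI < 31415927 / 10000000.
Proof.
  destruct (Rlt_or_le PI (31415927 / 10000000)) as [H|H]; [exact H|exfalso].
  assert (Hc : 0 <= cos (31415927 / 20000000)).
  { apply cos_ge_0; assert (H0 := PI_RGT_0); lra. }
  destruct (pre_cos_bound (31415927 / 20000000) 3) as [_ H1]; [lra|lra|].
  assert (cos_approx (31415927 / 20000000) (2 * (3 + 1)) < 0); [|lra].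
  rewrite cos_approx_Z. unfold cosZ. cbv [sum_f_R0 Nat.mul Nat.add zfact Z.of_nat Z.mul Pos.mul Pos.of_succ_nat Pos.succ Pos.add].
  lra.
Qed.

Lemma G_nonneg x : 0 <= x -> 0 <= G x.
Proof.
  intros Hx. rewrite <- G_0. apply (incr_deriv G gf 0 x Hx).
  - intros; apply G_deriv.
  - intros; unfold gf; apply Rlt_le, exp_pos.
Qed.

Lemma erf_G x : erf x = 2 / sqrt PI * G x.
Proof.
  unfold erf, G. f_equal. symmetry. apply (RInt_Reals gf 0 x (erf_integrable x)).
Qed.

Lemma t9 : texpR 34 9 < 13 / 100000.
Proof.
  unfold texpR. cbv [sum_f_R0 zfact Z.of_nat Z.mul Pos.mul Pos.of_succ_nat Pos.succ Pos.add].
  lra.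
Qed.

Lemma sq_lt a b : 0 <= a -> 0 <= b -> a * a < b * b -> a < b.
Proof. intros Ha Hb H. destruct (Rlt_or_le a b) as [h|h]; [exact h|]. nra. Qed.

Lemma uu_ge s : 0 <= s -> s <= uu s.
Proof.
  intros Hs. unfold uu. assert (0 < 13347 / 1000 + 2 * s) by lra.
  apply (Rmult_le_reg_r (13347 / 1000 + 2 * s)); [lra|].
  field_simplify; [|lra]. nra.
Qed.

Theorem mainTheorem2 :
  forall x : R, 0 < x ->
    Rabs ((E_approx x - erf x) / erf x) < 179 / 1000000.
Proof.
  intros x Hx.
  set (s := x ^ 2).
  assert (Hs : 0 < s) by (unfold s; apply pow_lt; lra).
  assert (HE : E_approx x = sqrt (1 - exp (- uu s))).
  { unfold E_approx, uu, s. f_equal. f_equal. f_equal. ring. }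
  set (e := exp (- uu s)) in HE.
  assert (Hu := uu_ge s (Rlt_le _ _ Hs)).
  assert (He1 : e <= 1) by (apply exp_neg_le1; lra).
  assert (He0 : 0 < e) by apply exp_pos.
  set (Ev := E_approx x) in *.
  assert (HEv0 : 0 <= Ev) by (rewrite HE; apply sqrt_pos).
  assert (HEv2 : Ev * Ev = 1 - e) by (rewrite HE; apply sqrt_sqrt; lra).
  assert (HPl := PI_lb). assert (HPu := PI_ub).
  set (SP := sqrt PI).
  assert (HSP : SP * SP = PI) by (apply sqrt_sqrt; lra).
  assert (HSP0 : 0 < SP) by (apply sqrt_lt_R0; lra).
  rewrite erf_G. fold SP.
  set (Gx := G x).
  assert (HG0 : 0 <= Gx) by (apply G_nonneg; lra).
  set (F := 2 / SP * Gx).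
  assert (HF2 : F * F * PI = 4 * (Gx * Gx)).
  { unfold F. rewrite <- HSP. field. lra. }
  assert (key : (1 - 179/1000000) * F < Ev < (1 + 179/1000000) * F).
  { destruct (Rle_or_lt s 9) as [Hs9|Hs9].
    -
      assert (HL := keyL s (conj (Rlt_le _ _ Hs) Hs9)).
      assert (HGl := G_poly 31 x (Rlt_le _ _ Hx)). simpl ((-1) ^ 32) in HGl.
      assert (HGu := G_poly 30 x (Rlt_le _ _ Hx)). simpl ((-1) ^ 31) in HGu.
      unfold Lpoly in HGl, HGu. fold s in HGl, HGu. fold Gx in HGl, HGu.
      assert (HTl := texp_alt 35 (uu s) ltac:(lra)). simpl ((-1) ^ 36) in HTl. fold e in HTl.
      assert (HTu := texp_alt 34 (uu s) ltac:(lra)). simpl ((-1) ^ 35) in HTu. fold e in HTu.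
      assert (HA := keyA s (conj Hs Hs9)). assert (HB := keyB s (conj Hs Hs9)).
      set (L1 := Lsum 31 s) in *. set (L0 := Lsum 30 s) in *.
      set (T1 := texpR 35 (uu s)) in *. set (T0 := texpR 34 (uu s)) in *.
      assert (Hxs : x * x = s) by (unfold s; ring).
      assert (HGl' : x * L1 <= Gx) by lra.
      assert (HGu' : Gx <= x * L0) by lra.
      assert (HxL1 : 0 < x * L1) by (apply Rmult_lt_0_compat; lra).
      assert (HG2l : s * L1 ^ 2 <= Gx * Gx).
      { rewrite <- Hxs. replace (x * x * L1 ^ 2) with ((x * L1) * (x * L1)) by ring.
        apply Rmult_le_compat; lra. }
      assert (HG2u : Gx * Gx <= s * L0 ^ 2).
      { rewrite <- Hxs. replace (x * x * L0 ^ 2) with ((x * L0) * (x * L0)) by ring.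
        apply Rmult_le_compat; lra. }
      assert (HF0 : 0 < F).
      { unfold F. apply Rmult_lt_0_compat; [apply Rdiv_lt_0_compat; lra|lra]. }
      split.
      + apply sq_lt. nra. lra.
        assert (H1 : (1 - e) * PI >= (1 - T0) * (31415926 / 10000000)).
        { assert (0 < 1 - T0) by lra. nra. }
        assert (H2 : (1 - 179/1000000) ^ 2 * 4 * (Gx * Gx) < (1 - T0) * (31415926 / 10000000)) by nra.
        assert (H3 : (1 - 179 / 1000000) * F * ((1 - 179 / 1000000) * F) * PI < (1 - e) * PI).
        { replace ((1 - 179 / 1000000) * F * ((1 - 179 / 1000000) * F) * PI) with ((1 - 179/1000000) ^ 2 * (F * F * PI)) by ring.
          rewrite HF2. lra. }
        rewrite HEv2; apply (Rmult_lt_reg_r PI); lra.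
      + apply sq_lt. lra. nra.
        assert (H1 : (1 - e) * PI <= (1 - T1) * (31415927 / 10000000)).
        { assert (0 <= 1 - e) by lra. nra. }
        assert (H2 : (1 - T1) * (31415927 / 10000000) < (1 + 179/1000000) ^ 2 * 4 * (Gx * Gx)) by nra.
        assert (H3 : (1 - e) * PI < (1 + 179 / 1000000) * F * ((1 + 179 / 1000000) * F) * PI).
        { replace ((1 + 179 / 1000000) * F * ((1 + 179 / 1000000) * F) * PI) with ((1 + 179/1000000) ^ 2 * (F * F * PI)) by ring.
          rewrite HF2. lra. }
        rewrite HEv2; apply (Rmult_lt_reg_r PI); lra.
    -
      assert (Hes : exp (- s) <= 13 / 100000).
      { assert (H9 : 0 <= (-1) ^ 35 * (exp (- 9) - texpR 34 9)) by (apply texp_alt; lra).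
        replace ((-1) ^ 35) with (-1) in H9 by ring.
        assert (exp (- s) <= exp (- 9)).
        { left. apply exp_increasing. lra. }
        assert (H10 := t9). lra. }
      assert (Hee : e <= exp (- s)).
      { unfold e. destruct (Req_dec (uu s) s) as [Heq|Hne]; [rewrite Heq; lra|].
        left. apply exp_increasing. lra. }
      assert (Hgl := gauss_lower x (Rlt_le _ _ Hx)). fold s in Hgl. fold Gx in Hgl.
      assert (Hgu := gauss_upper x (Rlt_le _ _ Hx)). fold Gx in Hgu.
      assert (Hes0 : 0 < exp (- s)) by apply exp_pos.
      assert (HG2 : 0 < Gx * Gx) by (simpl in Hgl; nra).
      assert (HG : 0 < Gx) by nra.
      assert (HF0 : 0 < F).
      { unfold F. apply Rmult_lt_0_compat; [apply Rdiv_lt_0_compat; lra|lra]. }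
      simpl in Hgl, Hgu.
      split.
      + apply sq_lt. nra. lra.
        assert (H3 : (1 - 179 / 1000000) * F * ((1 - 179 / 1000000) * F) * PI < (1 - e) * PI).
        { replace ((1 - 179 / 1000000) * F * ((1 - 179 / 1000000) * F) * PI) with ((1 - 179/1000000) ^ 2 * (F * F * PI)) by ring.
          rewrite HF2. nra. }
        rewrite HEv2; apply (Rmult_lt_reg_r PI); lra.
      + apply sq_lt. lra. nra.
        assert (H3 : (1 - e) * PI < (1 + 179 / 1000000) * F * ((1 + 179 / 1000000) * F) * PI).
        { replace ((1 + 179 / 1000000) * F * ((1 + 179 / 1000000) * F) * PI) with ((1 + 179/1000000) ^ 2 * (F * F * PI)) by ring.
          rewrite HF2. nra. }
        rewrite HEv2; apply (Rmult_lt_reg_r PI); lra. }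
  assert (HF0 : 0 < F) by lra.
  apply Rabs_def1.
  - apply (Rmult_lt_reg_r F); [lra|]. unfold Rdiv. rewrite Rmult_assoc, Rinv_l by lra. lra.
  - apply (Rmult_lt_reg_r F); [lra|]. unfold Rdiv. rewrite Rmult_assoc, Rinv_l by lra. lra.
Qed.
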